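(* Let $F\in(k[\bar v,\bar w])^e$ satisfy $F(\bar v,\bar 0)=\bar v$ and $F(\bar 0,\bar w)=\bar w$, and let $\mathbb D=(D_{\mathbf i})$ and $\mathbb D'=(D'_{\mathbf i})$ be two $F$-derivations on the same $k$-algebra $R$. If for every $l\in\{1,\dots,e\}$ and every integer $0\le i<m$ we have $D_{p^i\varepsilon_l}=D'_{p^i\varepsilon_l}$, where $\varepsilon_l$ is the $l$-th unit vector of $\mathbb N^e$, then $\mathbb D=\mathbb D'$.
   Context: $k$ is a field of characteristic $p>0$; rings are commutative with $1$; $e\in\mathbb N_{>0}$, $m\in\mathbb N_{>0}\cup\{\infty\}$. For a $k$-algebra $R$, $R[\bar v]:=R[X_1,\dots,X_e]/(X_1^{p^m},\dots,X_e^{p^m})$ ($R[[\bar X]]$ if $m=\infty$), $v_i$ the image of $X_i$; similarly $R[\bar v,\bar w]$ with a second $e$-tuple $\bar w$ of $m$-truncated variables. $[p^m]=\{0,\dots,p^m-1\}$ ($\mathbb N$ if $m=\infty$), $\bar v^{\mathbf i}=v_1^{i_1}\cdots v_e^{i_e}$. An $m$-truncated $e$-dimensional HS-derivation on $R$ over $k$ is a family $(D_{\mathbf i}:R\to R)_{\mathbf i\in[p^m]^e}$ such that $r\mapsto\sum D_{\mathbf i}(r)\bar v^{\mathbf i}$ is a $k$-algebra homomorphism $R\to R[\bar v]$ with $D_{\mathbf 0}=\mathrm{id}$. For $F=(F_1,\dots,F_e)\in(k[\bar v,\bar w])^e$, it is an $F$-derivation if for all $r\in R$: $\sum_{\mathbf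 i,\mathbf j}D_{\mathbf j}(D_{\mathbf i}(r))\bar v^{\mathbf i}\bar w^{\mathbf j}=\sum_{\mathbf i}D_{\mathbf i}(r)F(\bar v,\bar w)^{\mathbf i}$, where $F^{\mathbf i}=F_1^{i_1}\cdots F_e^{i_e}$. *)

(* Defs.v *)
From HB Require Import structures.
From mathcomp Require Import all_boot all_order all_algebra.
Set Implicit Arguments. Unset Strict Implicit. Unset Printing Implicit Defensive.
Import Order.TTheory GRing.Theory Num.Theory.
Local Open Scope ring_scope.

Definition mi (e : nat) := {ffun 'I_e -> nat}.
Definition mi0 (e : nat) : mi e := [ffun => 0%N].
Definition unitv (e : nat) (l : 'I_e) (c : nat) : mi e :=
  [ffun l' => if l' == l then c else 0%N].
Definition misub (e : nat) (a j : mi e) : mi e := [ffun l => (a l - j l)%N].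
Definition mile (e : nat) (j a : mi e) : bool := [forall l, (j l <= a l)%N].
Definition miabs (e : nat) (a : mi e) : nat := (\sum_(l < e) a l)%N.
Definition mibound (e : nat) (a : mi e) : nat := (\max_(l < e) a l)%N.
Definition mival (e N : nat) (j : {ffun 'I_e -> 'I_N}) : mi e :=
  [ffun l => nat_of_ord (j l)].

Definition sum_below (V : nmodType) (e : nat) (a : mi e) (f : mi e -> V) : V :=
  \sum_(j : {ffun 'I_e -> 'I_(mibound a).+1} | mile (mival j) a) f (mival j).

(* Truncation level m in N_{>0} u {oo}: Some n = n, None = infinity. *)
Definition inrange (p : nat) (m : option nat) (e : nat) (a : mi e) : bool :=
  if m is Some n then [forall l, (a l < p ^ n)%N] else true.
Definition lt_m (i : nat) (m : option nat) : bool :=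
  if m is Some n then (i < n)%N else true.

(* Elements of k[v,w] (2e truncated variables) as coefficient functions:
   f a b = coefficient of v^a w^b. *)
Definition ser2 (k : Type) (e : nat) := mi e -> mi e -> k.

Definition one2 (k : nzRingType) (e : nat) : ser2 k e :=
  fun a b => if (a == mi0 e) && (b == mi0 e) then 1 else 0.

(* product in k[v,w] = k[X,Y]/(X^{p^m},Y^{p^m}) (power series if m = oo) *)
Definition mul2 (k : nzRingType) (p : nat) (m : option nat) (e : nat)
    (f g : ser2 k e) : ser2 k e :=
  fun a b => if inrange p m a && inrange p m b then
     sum_below a (fun a' => sum_below b (fun b' =>
        f a' b' * g (misub a a') (misub b b')))
   else 0.

Definition pow2 (k : nzRingType) (p : nat) (m : option nat) (e : nat)
    (f : ser2 k e) (n : nat) : ser2 k e :=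
  iter n (@mul2 k p m e f) (@one2 k e).

Definition Fpow (k : nzRingType) (p : nat) (m : option nat) (e : nat)
    (F : 'I_e -> ser2 k e) (i : mi e) : ser2 k e :=
  \big[@mul2 k p m e / @one2 k e]_(l < e) @pow2 k p m e (F l) (i l).

(* m-truncated e-dimensional HS-derivation over k on R, i.e. (D_i)_{i in [p^m]^e}
   such that r |-> sum_i D_i(r) v^i is a k-algebra hom R -> R[v] and D_0 = id;
   the hom condition is written out coefficientwise. *)
Definition HS_derivation (k : fieldType) (R : comAlgType k) (p : nat)
    (m : option nat) (e : nat) (D : mi e -> R -> R) : Prop :=
  [/\ forall r, D (mi0 e) r = r,
      forall a, inrange p m a -> forall (c : k) (x y : R),
        D a (c *: x + y) = c *: D a x + D a y,
      forall a, inrange p m a -> D a 1 = (if a == mi0 e then 1 else 0)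
    & forall a, inrange p m a -> forall x y : R,
        D a (x * y) = sum_below a (fun j => D j x * D (misub a j) y)].

(* F-derivation: sum_{i,j} D_j(D_i r) v^i w^j = sum_i D_i(r) F(v,w)^i,
   compared coefficient of v^a w^b for a, b in [p^m]^e.
   For finite m the sum on the right runs over all i in [p^m]^e.  For m = oo
   it is the (adically convergent, as F(0,0)=0) infinite sum; only indices i
   with all components <= |a|+|b| can contribute to the coefficient of v^a w^b
   when F(0,0) = 0, so we sum over those. *)
Definition F_derivation (k : fieldType) (R : comAlgType k) (p : nat)
    (m : option nat) (e : nat) (F : 'I_e -> ser2 k e) (D : mi e -> R -> R) : Prop :=
  @HS_derivation k R p m e D /\
  forall (r : R) (a b : mi e), inrange p m a -> inrange p m b ->
    D b (D a r) =
    sum_below [ffun => if m is Some n then (p ^ n).-1 else (miabs a + miabs b)%N]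
      (fun i => if inrange p m i then @Fpow k p m e F i a b *: D i r else 0).

(* Main.v *)
Require Import Defs.
From HB Require Import structures.
From mathcomp Require Import all_boot all_order all_algebra zify.
Import Order.TTheory GRing.Theory Num.Theory.
Set Implicit Arguments. Unset Strict Implicit. Unset Printing Implicit Defensive.
Local Open Scope ring_scope.
Lemma binX (k : fieldType) n j : (('X + 1)^+n : {poly k})`_j = ('C(n,j))%:R.
Proof.
rewrite exprD1n coef_sum.
under eq_bigr do rewrite coefMn coefXn.
case: (ltnP j n.+1) => hj.
  rewrite (bigD1 (Ordinal hj)) //= eqxx mulr1n big1 ?addr0 //.
  move=> i hi; case: eqP => [hji|]; last by rewrite mul0rn.
  by case/eqP: hi; apply: val_inj; rewrite /= hji.
rewrite bin_small // big1 // => i _.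
case: eqP => [hji|]; last by rewrite mul0rn.
by move: (ltn_ord i); rewrite -hji ltnNge hj.
Qed.

Lemma binp (k : fieldType) p (hp : p \in [pchar k]) s u :
  ~~ (p %| u)%N -> ('C(p ^ s * u, p ^ s))%:R != 0 :> k.
Proof.
move=> hu.
have pr := pcharf_prime hp.
have hq : (0 < p ^ s)%N by rewrite expn_gt0 prime_gt0.
have hpp : p \in [pchar {poly k}] by rewrite pchar_poly.
have E : (('X + 1)^+(p ^ s * u) : {poly k}) = \sum_(i < u.+1) 'X^(p ^ s * i) *+ 'C(u, i).
  rewrite exprM exprDn_pchar; last first.
    apply: (@sub_in_pnat (pred1 p)); last by rewrite pnatX pnat_id.
    by move=> q _ /eqP ->.
  rewrite expr1n exprD1n; apply: eq_bigr => i _; by rewrite -exprM.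
have := binX k (p ^ s * u) (p ^ s); rewrite E coef_sum.
under eq_bigr do rewrite coefMn coefXn.
move=> <-.
have hu1 : (1 < u.+1)%N.
  by move: hu; case: (u) => //; rewrite dvdn0.
rewrite (bigD1 (Ordinal hu1)) //= muln1 eqxx mulr1n bin1 big1 ?addr0.
  by rewrite -(dvdn_pcharf hp).
move=> i hi; case: eqP => [hji|]; last by rewrite mul0rn.
case/eqP: hi; apply: val_inj => /=.
by apply/eqP; rewrite -(eqn_pmul2l hq) muln1 -hji.
Qed.


Section MI.
Variable e : nat.
Implicit Types a j x y : mi e.

Definition miadd x y : mi e := [ffun l => (x l + y l)%N].

Lemma mileP j a : reflect (forall l, (j l <= a l)%N) (mile j a).
Proof. exact: forallP. Qed.

Lemma miabs_sub j a : mile j a -> (miabs j + miabs (misub a j))%N = miabs a.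
Proof.
move/mileP=> h; rewrite /miabs -big_split /=; apply: eq_bigr => l _.
by rewrite ffunE subnKC.
Qed.

Lemma mile_sub j a : mile (misub a j) a.
Proof. by apply/mileP => l; rewrite ffunE leq_subr. Qed.

Lemma mile_bound j a : mile j a -> forall l, (j l <= mibound a)%N.
Proof. by move/mileP=> h l; apply: leq_trans (h l) (leq_bigmax l). Qed.

Lemma le_miabs a l : (a l <= miabs a)%N.
Proof. by rewrite /miabs (bigD1 l) //= leq_addr. Qed.

Lemma miabs_eq0 a : miabs a = 0%N -> a = mi0 e.
Proof.
move=> /eqP; rewrite sum_nat_eq0 => /forallP h; apply/ffunP => l.
by rewrite ffunE; apply/eqP; exact: h.
Qed.

Lemma miabs0 : miabs (mi0 e) = 0%N.
Proof. by rewrite /miabs big1 // => l _; rewrite ffunE. Qed.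

Lemma miabs_unitv (l : 'I_e) c : miabs (unitv l c) = c.
Proof.
rewrite /miabs (bigD1 l) //= big1 ?addn0 ?ffunE ?eqxx // => l' hl.
by rewrite ffunE (negbTE hl).
Qed.

Lemma miabs_add x y : miabs (miadd x y) = (miabs x + miabs y)%N.
Proof. by rewrite /miabs -big_split; apply: eq_bigr => l _; rewrite ffunE. Qed.

Definition toIdx a j : {ffun 'I_e -> 'I_(mibound a).+1} := [ffun l => inord (j l)].

Lemma mival_toIdx a j : mile j a -> mival (toIdx a j) = j.
Proof.
move=> h; apply/ffunP => l; rewrite !ffunE inordK //.
by rewrite ltnS; apply: mile_bound.
Qed.

Section SB.
Variable V : nmodType.

Lemma sum_below_eq a (f g : mi e -> V) :
  (forall j, mile j a -> f j = g j) -> sum_below a f = sum_below a g.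
Proof. by move=> h; apply: eq_bigr => J hJ; apply: h. Qed.

Lemma sum_below0 a (f : mi e -> V) :
  (forall j, mile j a -> f j = 0) -> sum_below a f = 0.
Proof. by move=> h; apply: big1 => J hJ; apply: h. Qed.

Lemma sum_below_single a j0 (f : mi e -> V) :
  (forall j, mile j a -> j != j0 -> f j = 0) ->
  sum_below a f = if mile j0 a then f j0 else 0.
Proof.
move=> h; case hj0: (mile j0 a).
  rewrite /sum_below (bigD1 (toIdx a j0)) /=; last by rewrite mival_toIdx.
  rewrite mival_toIdx // big1 ?addr0 // => J /andP[hJ hne]; apply: h => //.
  apply: contra hne => /eqP he; apply/eqP/ffunP => l; apply: val_inj.
  by rewrite /= ffunE -he ffunE inordK // ltn_ord.
apply: sum_below0 => j hj; apply: h => //.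
by apply: contraFN hj0 => /eqP <-.
Qed.
End SB.
End MI.
Section Lead.
Variables (k : fieldType) (p : nat) (m : option nat) (e : nat).
Local Notation ir := (inrange p m).

Lemma inrange_le (j a : mi e) : mile j a -> ir a -> ir j.
Proof.
rewrite /inrange; case: m => // n /mileP h /forallP ha; apply/forallP => l.
exact: leq_ltn_trans (h l) (ha l).
Qed.

Definition lead (f : ser2 k e) d (c : ser2 k e) := forall a b, ir a -> ir b ->
  (miabs a + miabs b <= d)%N -> f a b = if (miabs a + miabs b == d)%N then c a b else 0.

Definition conv d (c1 c2 : ser2 k e) : ser2 k e := fun a b =>
  sum_below a (fun a' => sum_below b (fun b' =>
    if (miabs a' + miabs b' == d)%N then c1 a' b' * c2 (misub a a') (misub b b') else 0)).

Lemma lead_ext f d c c' : lead f d c ->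
  (forall a b, ir a -> ir b -> (miabs a + miabs b)%N = d -> c a b = c' a b) -> lead f d c'.
Proof.
move=> h hc a b ha hb hab; rewrite h //; case: eqP => // /hc -> //.
Qed.

Lemma lead_mul f g d1 d2 c1 c2 : lead f d1 c1 -> lead g d2 c2 ->
  lead (mul2 p m f g) (d1 + d2) (conv d1 c1 c2).
Proof.
move=> hf hg a b ha hb hab; rewrite /mul2 ha hb /=.
have key : forall a' b', mile a' a -> mile b' b ->
    f a' b' * g (misub a a') (misub b b') =
    if (miabs a + miabs b == d1 + d2)%N then
     (if (miabs a' + miabs b' == d1)%N then c1 a' b' * c2 (misub a a') (misub b b') else 0)
    else 0.
  move=> a' b' ha' hb'.
  have e1 := miabs_sub ha'; have e2 := miabs_sub hb'.
  have ia' := inrange_le ha' ha; have ib' := inrange_le hb' hb.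
  have ia'' := inrange_le (mile_sub a' a) ha; have ib'' := inrange_le (mile_sub b' b) hb.
  case: (leqP (miabs a' + miabs b') d1) => h1.
    rewrite hf //; case: eqP => h1e; last first.
      by rewrite mul0r; case: ifP.
    rewrite hg //; last by lia.
    have -> : (miabs (misub a a') + miabs (misub b b') == d2)%N =
              (miabs a + miabs b == d1 + d2)%N by apply/eqP/eqP; lia.
    by case: ifP => _ //; rewrite mulr0.
  rewrite (hg _ _ ia'' ib''); last by lia.
  case: eqP; first by lia.
  by move=> _; rewrite mulr0; case: ifP => // _; case: eqP => // h; exfalso; lia.
case: eqP => hE.
  rewrite /conv; apply: sum_below_eq => a' ha'; apply: sum_below_eq => b' hb'.
  by rewrite key // hE eqxx.
apply: sum_below0 => a' ha'; apply: sum_below0 => b' hb'.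
by rewrite key //; case: eqP.
Qed.
End Lead.
Section LcSec.
Variables (k : fieldType) (e : nat).

Definition Lc (x : mi e) : ser2 k e := fun a b =>
  if [forall l, (a l + b l == x l)%N] then \prod_(l < e) ('C(x l, a l))%:R else 0.

Lemma prod_zero (G : 'I_e -> k) l : G l = 0 -> \prod_(l0 < e) G l0 = 0.
Proof. by move=> h; rewrite (bigD1 l) //= h mul0r. Qed.

Lemma sum_prod (a : mi e) (G : 'I_e -> nat -> k) :
  sum_below a (fun a' => \prod_(l < e) G l (a' l)) =
  \prod_(l < e) \sum_(j < (a l).+1) G l j.
Proof.
rewrite /sum_below big_mkcond /=.
transitivity (\sum_(J : {ffun 'I_e -> 'I_(mibound a).+1})
                \prod_(l < e) (if (J l <= a l)%N then G l (J l) else 0)).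
  apply: eq_bigr => J _; case: ifP => hJ.
    by apply: eq_bigr => l _; have := mileP _ _ hJ l; rewrite ffunE => ->.
  move/negbT: hJ => /forallPn; case => l; rewrite ffunE => hl.
  by apply/esym/(prod_zero (l := l)); rewrite (negbTE hl).
rewrite -(bigA_distr_bigA (fun l (j : 'I_(mibound a).+1) =>
            if (j <= a l)%N then G l j else 0)).
apply: eq_bigr => l _.
rewrite -big_mkcond /=.
rewrite (@big_ord_widen _ _ _ (a l).+1 (mibound a).+1 (fun j => G l j)); last first.
  by rewrite ltnS (leq_bigmax l).
by apply: eq_bigl => j; rewrite ltnS.
Qed.

Definition Hc (x y a b : mi e) (a' : mi e) : k := if mile a' x && [forall l, (a l + b l == x l + y l)%N]
  then \prod_(l < e) ('C(x l, a' l)%:R * 'C(y l, a l - a' l)%:R) else 0.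

Lemma conv_Lc (x y a b : mi e) :
  conv (miabs x) (Lc x) (Lc y) a b = Lc (miadd x y) a b.
Proof.
have inner : forall a', mile a' a ->
  sum_below b (fun b' => if (miabs a' + miabs b' == miabs x)%N
     then Lc x a' b' * Lc y (misub a a') (misub b b') else 0)
  = if mile (misub x a') b then Hc x y a b a' else 0.
  move=> a' ha'; rewrite (sum_below_single (j0 := misub x a')).
    case hb: (mile (misub x a') b) => //.
    rewrite /Hc; case hx: (mile a' x) => /=.
      rewrite miabs_sub // eqxx /Lc.
      have -> : [forall l, (a' l + misub x a' l == x l)%N].
        by apply/forallP => l; rewrite ffunE subnKC // (mileP _ _ hx l).
      have -> : [forall l, (misub a a' l + misub b (misub x a') l == y l)%N] =
                [forall l, (a l + b l == x l + y l)%N].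
        apply: eq_forallb => l; rewrite !ffunE.
        have := mileP _ _ ha' l; have := mileP _ _ hb l; have := mileP _ _ hx l.
        rewrite ffunE => h1 h2 h3; apply/eqP/eqP; lia.
      case: ifP => _; last by rewrite mulr0.
      by rewrite -big_split /=; apply: eq_bigr => l _; rewrite !ffunE.
    rewrite /Lc.
    have -> : [forall l, (a' l + misub x a' l == x l)%N] = false.
      apply/negbTE/forallP => hf; move/negbT: hx => /forallP; apply => l.
      by have := hf l; rewrite ffunE => /eqP; lia.
    by rewrite mul0r; case: ifP.
  move=> b' hb' hne; rewrite /Lc.
  have -> : [forall l, (a' l + b' l == x l)%N] = false.
    apply/negbTE/forallP => hf; move/eqP: hne; apply; apply/ffunP => l.
    rewrite ffunE; change (b' l = x l - a' l)%N.
    by have := hf l; move/eqP; lia.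
  by rewrite mul0r; case: ifP.
rewrite /conv (sum_below_eq (g := fun a' => if mile (misub x a') b then Hc x y a b a' else 0)); last first.
  by move=> a' ha'; rewrite inner.
rewrite /Lc.
have -> : [forall l, (a l + b l == miadd x y l)%N] = [forall l, (a l + b l == x l + y l)%N].
  by apply: eq_forallb => l; rewrite ffunE.
case hc: [forall l, (a l + b l == x l + y l)%N]; last first.
  by apply: sum_below0 => a' _; rewrite /Hc hc andbF; case: ifP.
pose G (l : 'I_e) (j : nat) : k := 'C(x l, j)%:R * 'C(y l, a l - j)%:R.
rewrite (sum_below_eq (g := fun a' => \prod_(l < e) G l (a' l))); last first.
  move=> a' ha'; rewrite /Hc hc andbT.
  case h1: (mile a' x); last first.
    move/negbT: h1 => /forallPn; case => l hl.
    have -> : \prod_(l0 < e) G l0 (a' l0) = 0.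
      by apply: (prod_zero (l := l)); rewrite /G bin_small ?mul0r // ltnNge.
    by case: ifP.
  case h2: (mile (misub x a') b) => //.
  move/negbT: h2 => /forallPn; case => l; rewrite ffunE => hl.
  apply/esym/(prod_zero (l := l)); rewrite /G (bin_small (n := y l)) ?mulr0 //.
  have := mileP _ _ ha' l; have := mileP _ _ h1 l; move/forallP: hc => /(_ l) /eqP.
  lia.
rewrite sum_prod; apply: eq_bigr => l _.
by rewrite /G ffunE -(binomial.Vandermonde (x l) (y l) (a l)) natr_sum;
   apply: eq_bigr => j _; rewrite natrM.
Qed.
End LcSec.
Section FpowSec.
Variables (k : fieldType) (p : nat) (m : option nat) (e : nat).
Variable F : 'I_e -> ser2 k e.
Hypothesis HFv : forall (l : 'I_e) (a : mi e), inrange p m a ->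
           F l a (mi0 e) = (a == unitv l 1)%:R.
Hypothesis HFw : forall (l : 'I_e) (b : mi e), inrange p m b ->
           F l (mi0 e) b = (b == unitv l 1)%:R.

Lemma lead_one2 : lead p m (@one2 k e) 0 (Lc k (mi0 e)).
Proof.
move=> a b ha hb hab.
have ha0 : miabs a = 0%N by lia.
have hb0 : miabs b = 0%N by lia.
rewrite (miabs_eq0 ha0) (miabs_eq0 hb0) /one2 eqxx miabs0 /= /Lc.
have -> : [forall l, (mi0 e l + mi0 e l == mi0 e l)%N] by apply/forallP => l; rewrite ffunE.
by rewrite big1 // => l _; rewrite ffunE bin0.
Qed.

Lemma Lc_unitv1 (l : 'I_e) : \prod_(l0 < e) ('C(unitv l 1 l0, unitv l 1 l0))%:R = 1 :> k.
Proof. by rewrite big1 // => l0 _; rewrite binn. Qed.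

Lemma lead_F l : lead p m (F l) 1 (Lc k (unitv l 1)).
Proof.
move=> a b ha hb hab.
have [hb0|ha0] : miabs b = 0%N \/ miabs a = 0%N.
    case: (posnP (miabs b)) => [->|hb1]; first by left.
    by right; lia.
  rewrite (miabs_eq0 hb0) HFv // miabs0 addn0.
  case: (a =P unitv l 1) => [->|hne].
    rewrite miabs_unitv eqxx /Lc.
    have -> : [forall l0, (unitv l 1 l0 + mi0 e l0 == unitv l 1 l0)%N].
      by apply/forallP => l0; rewrite [mi0 e l0]ffunE addn0.
    by rewrite Lc_unitv1.
  rewrite /Lc.
  have -> : [forall l0, (a l0 + mi0 e l0 == unitv l 1 l0)%N] = false.
    apply/negbTE/forallP => hf; apply: hne; apply/ffunP => l0.
    by have := hf l0; rewrite [mi0 e l0]ffunE addn0 => /eqP.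
  by case: ifP.
rewrite (miabs_eq0 ha0) HFw // miabs0 add0n.
case: (b =P unitv l 1) => [->|hne].
  rewrite miabs_unitv eqxx /Lc.
  have -> : [forall l0, (mi0 e l0 + unitv l 1 l0 == unitv l 1 l0)%N].
    by apply/forallP => l0; rewrite [mi0 e l0]ffunE.
  by rewrite big1 // => l0 _; rewrite [mi0 e l0]ffunE bin0.
rewrite /Lc.
have -> : [forall l0, (mi0 e l0 + b l0 == unitv l 1 l0)%N] = false.
  apply/negbTE/forallP => hf; apply: hne; apply/ffunP => l0.
  by have := hf l0; rewrite [mi0 e l0]ffunE => /eqP.
by case: ifP.
Qed.

Lemma unitv_add (l : 'I_e) c1 c2 : miadd (unitv l c1) (unitv l c2) = unitv l (c1 + c2).
Proof. by apply/ffunP => l0; rewrite !ffunE; case: eqP. Qed.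

Lemma lead_pow2 l n : lead p m (pow2 p m (F l) n) n (Lc k (unitv l n)).
Proof.
elim: n => [|n IH].
  have -> : unitv l 0 = mi0 e by apply/ffunP => l0; rewrite !ffunE; case: eqP.
  exact: lead_one2.
have := lead_mul (lead_F l) IH; rewrite add1n => h.
apply: (lead_ext h) => a b _ _ _.
by rewrite -{1}(miabs_unitv l 1) conv_Lc unitv_add add1n.
Qed.

Lemma lead_big (i : mi e) (r : seq 'I_e) : uniq r ->
  lead p m (\big[@mul2 k p m e / @one2 k e]_(l <- r) pow2 p m (F l) (i l))
    (\sum_(l <- r) i l)%N (Lc k [ffun l => if l \in r then i l else 0%N]).
Proof.
elim: r => [|l r IH] /=.
  move=> _; rewrite !big_nil.
  have -> : [ffun l => if l \in [::] then i l else 0%N] = mi0 e.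
    by apply/ffunP => l; rewrite !ffunE.
  exact: lead_one2.
case/andP => hl hu; rewrite !big_cons.
have := lead_mul (lead_pow2 l (n:=i l)) (IH hu) => h.
apply: (lead_ext h) => a b _ _ _.
rewrite -{1}(miabs_unitv l (i l)) conv_Lc; congr Lc; apply/ffunP => l0.
rewrite !ffunE in_cons; case: eqP => [->|_] /=; last by rewrite add0n.
by rewrite (negbTE hl) addn0.
Qed.

Lemma lead_Fpow (i : mi e) : lead p m (Fpow p m F i) (miabs i) (Lc k i).
Proof.
have := lead_big (i:=i) (index_enum_uniq 'I_e).
have -> : [ffun l => if l \in index_enum 'I_e then i l else 0%N] = i.
  by apply/ffunP => l; rewrite ffunE mem_index_enum.
by [].
Qed.
End FpowSec.
Section Main.
Variables (k : fieldType) (p : nat) (e : nat) (m : option nat).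
Variables (R : comAlgType k) (F : 'I_e -> ser2 k e).
Hypothesis HFv : forall (l : 'I_e) (a : mi e), inrange p m a ->
           F l a (mi0 e) = (a == unitv l 1)%:R.
Hypothesis HFw : forall (l : 'I_e) (b : mi e), inrange p m b ->
           F l (mi0 e) b = (b == unitv l 1)%:R.
Variables (D D' : mi e -> R -> R).
Hypotheses (hD : F_derivation p m F D) (hD' : F_derivation p m F D').

Lemma sum_belowB (V : zmodType) (a : mi e) (f g : mi e -> V) :
  sum_below a f - sum_below a g = sum_below a (fun j => f j - g j).
Proof. by rewrite /sum_below sumrB. Qed.

Lemma split_step (a a' b' : mi e) :
  inrange p m a -> a = miadd a' b' ->
  (forall j, inrange p m j -> (miabs j < miabs a)%N -> forall r, D j r = D' j r) ->
  (miabs a' < miabs a)%N -> (miabs b' < miabs a)%N ->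
  Lc k a a' b' != 0 -> forall r, D a r = D' a r.
Proof.
move=> ha hadd IH h1 h2 hC r.
have la' : mile a' a by apply/mileP => l; rewrite hadd ffunE leq_addr.
have lb' : mile b' a by apply/mileP => l; rewrite hadd ffunE leq_addl.
have ia' := inrange_le la' ha; have ib' := inrange_le lb' ha.
have habs : (miabs a' + miabs b')%N = miabs a by rewrite hadd miabs_add.
have E : D b' (D a' r) = D' b' (D' a' r) by rewrite (IH a') // (IH b').
case: hD => _ /(_ r a' b' ia' ib') hDr.
case: hD' => _ /(_ r a' b' ia' ib') hD'r.
move/eqP: E; rewrite hDr hD'r -subr_eq0 sum_belowB.
rewrite (sum_below_single (j0 := a)); last first.
  move=> i _ hne; case hi: (inrange p m i); last by rewrite subrr.
  case: (ltnP (miabs i) (miabs a)) => hia.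
    by rewrite (IH i) // subrr.
  rewrite (lead_Fpow HFv HFw ia' ib'); last by rewrite habs.
  case: eqP => _; last by rewrite !scale0r subrr.
  rewrite /Lc.
  have -> : [forall l, (a' l + b' l == i l)%N] = false.
    apply/negbTE/forallP => hf; move/eqP: hne; apply; rewrite hadd.
    apply/ffunP => l; rewrite ffunE; apply/esym/eqP; exact: hf.
  by rewrite !scale0r subrr.
rewrite ha (lead_Fpow HFv HFw ia' ib'); last by rewrite habs.
rewrite habs eqxx -scalerBr.
have -> : mile a [ffun=> if m is Some n then (p ^ n).-1 else miabs a].
  apply/mileP => l; rewrite ffunE; move: ha; rewrite /inrange.
  case: m => [n /forallP /(_ l) hl | _]; first by lia.
  by rewrite le_miabs.
by rewrite scaler_eq0 (negbTE hC) /= subr_eq0 => /eqP.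
Qed.
End Main.

Unset Implicit Arguments.

Theorem fact2p14 (k : fieldType) (p : nat) (hp : p \in [pchar k])
  (e : nat) (he : (0 < e)%N) (m : option nat)
  (hm : forall n, m = Some n -> (0 < n)%N)
  (R : comAlgType k) (F : 'I_e -> ser2 k e)
  (HFv : forall (l : 'I_e) (a : mi e), inrange p m a ->
           F l a (mi0 e) = (a == unitv l 1)%:R)
  (HFw : forall (l : 'I_e) (b : mi e), inrange p m b ->
           F l (mi0 e) b = (b == unitv l 1)%:R)
  (D D' : mi e -> R -> R)
  (hD : F_derivation p m F D) (hD' : F_derivation p m F D')
  (Heq : forall (l : 'I_e) (i : nat), lt_m i m ->
           forall r : R, D (unitv l (p ^ i)) r = D' (unitv l (p ^ i)) r) :
  forall a : mi e, inrange p m a -> forall r : R, D a r = D' a r.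
Proof.
have pr := pcharf_prime hp.
have p1 := prime_gt1 pr.
suff main : forall n (a : mi e), (miabs a <= n)%N -> inrange p m a ->
    forall r, D a r = D' a r.
  by move=> a; exact: main.
elim => [|n IHn] a han ha r.
  have -> : a = mi0 e by apply: miabs_eq0; lia.
  by case: hD => [[-> _ _ _] _]; case: hD' => [[-> _ _ _] _].
case: (leqP (miabs a) n) => hle; first exact: IHn.
have IH : forall j, inrange p m j -> (miabs j < miabs a)%N -> forall r, D j r = D' j r.
  by move=> j hj hja; apply: IHn => //; lia.
case: (pickP (fun l => (0 < a l)%N)) => [l hl | hnone]; last first.
  have : a = mi0 e.
    by apply/ffunP => l; rewrite ffunE; have := hnone l; case: (a l).
  by move=> ha0; move: hle; rewrite ha0 miabs0.
case: (pickP (fun l' => (l' != l) && (0 < a l')%N)) => [l' /andP[hl' hpos] | hnone].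
  pose a' := unitv l (a l); pose b' := misub a a'.
  have la' : mile a' a by apply/mileP => l0; rewrite ffunE; case: eqP => [->|].
  have hs : (miabs a' + miabs b')%N = miabs a by exact: miabs_sub la'.
  have hb'l : b' l' = a l' by rewrite !ffunE (negbTE hl') subn0.
  have hb2 : (a l' <= miabs b')%N by rewrite -hb'l le_miabs.
  have ha' : miabs a' = a l by rewrite miabs_unitv.
  have [h1 h2] : (miabs a' < miabs a)%N /\ (miabs b' < miabs a)%N.
    move: hs hb2 ha' hl hpos; clear; move: (miabs a') (miabs b') (miabs a) (a l) (a l').
    move=> x y z u v; lia.
  apply: (split_step HFv HFw hD hD' ha _ IH h1 h2).
    apply/ffunP => l0; rewrite !ffunE; case: (l0 =P l) => [->|_]; first by rewrite subnn addn0.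
    by rewrite subn0.
  rewrite /Lc.
  have -> : [forall l0, (a' l0 + b' l0 == a l0)%N].
    apply/forallP => l0; rewrite !ffunE; case: (l0 =P l) => [->|_]; first by rewrite subnn addn0.
    by rewrite subn0.
  rewrite big1 ?oner_neq0 // => l0 _; rewrite !ffunE; case: (l0 =P l) => [->|_].
    by rewrite binn.
  by rewrite bin0.
have ha_eq : a = unitv l (a l).
  apply/ffunP => l0; rewrite ffunE; case: (l0 =P l) => [->//|/eqP hne].
  by have := hnone l0; rewrite hne /=; case: (a l0).
have [u hu hal] := pfactor_coprime pr hl.
set s := logn p (a l) in hal.
have hq : (0 < p ^ s)%N by rewrite expn_gt0 prime_gt0.
have hu0 : (0 < u)%N by move: hl; rewrite hal; case: (u).
case: (eqVneq u 1) => hu1.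
  rewrite ha_eq hal hu1 mul1n; apply: Heq.
  move: ha; rewrite ha_eq /inrange /lt_m; case Em: m => [N|] // /forallP /(_ l).
  rewrite ffunE eqxx hal hu1 mul1n ltn_exp2l //.
pose a' := unitv l (a l - p ^ s); pose b' := unitv l (p ^ s).
have hu2 : (1 < u)%N by lia.
have hlt : (p ^ s < a l)%N by rewrite hal -{1}(mul1n (p ^ s)%N) ltn_pmul2r.
have h1 : (miabs a' < miabs a)%N by rewrite ha_eq !miabs_unitv; lia.
have h2 : (miabs b' < miabs a)%N by rewrite ha_eq !miabs_unitv; lia.
apply: (split_step HFv HFw hD hD' ha _ IH h1 h2).
  by rewrite {1}ha_eq unitv_add subnK // ltnW.
rewrite /Lc.
have -> : [forall l0, (a' l0 + b' l0 == a l0)%N].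
  apply/forallP => l0; rewrite /a' /b' !ffunE; case: (l0 =P l) => [->|/eqP hne].
    by rewrite subnK // ltnW.
  by have := hnone l0; rewrite hne /=; case: (a l0).
rewrite (bigD1 l) // big1; last first.
  by move=> l0 hl0; rewrite /a' ffunE (negbTE hl0) bin0.
rewrite /= mulr1 /a' ffunE eqxx bin_sub; last exact: ltnW.
have hpu : ~~ (p %| u)%N by rewrite -prime_coprime.
have := binp hp s hpu.
by rewrite mulnC -hal.
Qed.
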